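(* Let $p$ be a prime, $f\ge 1$ an integer and $q=p^f$. For $0\le j\le f-1$ fix integers $r_j\ge 0$ such that $r=r_0+r_1p+\cdots+r_{f-1}p^{f-1}>0$ is divisible by $q-1$. For a tuple $(k_0,\dots,k_{f-1})$ of integers write $k=k_0+k_1p+\cdots+k_{f-1}p^{f-1}$. Then for every integer $i\in[0,q-1)$, \[ \sum_{\substack{0\le k_j\le r_j\ (0\le j\le f-1)\\ k\equiv i \bmod (q-1)}} \binom{r_0}{k_0}\binom{r_1}{k_1}\cdots\binom{r_{f-1}}{k_{f-1}} \equiv \begin{cases} (-1)^i \pmod p & \text{if } i\in(0,q-1),\\ 2 \pmod p & \text{if } i=0.\end{cases} \]
   Context: Here the $r_j$ are arbitrary non-negative integers (not necessarily base-$p$ digits; they may exceed $p-1$). *)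

(* Defs.v *)
From mathcomp Require Import all_boot all_order all_algebra.
Set Implicit Arguments. Unset Strict Implicit. Unset Printing Implicit Defensive.
Import Order.TTheory GRing.Theory Num.Theory.

Definition pval (p f : nat) (k : 'I_f -> nat) : nat :=
  \sum_(j < f) k j * p ^ j.

(* maximum of the r_j: uniform bound used to range the k_j *)
Definition rmax (f : nat) (r : 'I_f -> nat) : nat := \max_(j < f) r j.

Definition binsum (p f : nat) (r : 'I_f -> nat) (i : nat) : nat :=
  \sum_(k : {ffun 'I_f -> 'I_(rmax r).+1}
         | [forall j, (k j <= r j)%N] &&
           (pval p (fun j => nat_of_ord (k j)) == i %[mod (p ^ f).-1]))
     \prod_(j < f) 'C(r j, k j).

(* Main.v *)
Require Import Defs.
From mathcomp Require Import all_boot all_order all_algebra.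
From mathcomp Require Import ring zify.
Import Order.TTheory GRing.Theory Num.Theory.
Local Open Scope ring_scope.

Definition Sm (R : nzRingType) (m i : nat) (P : {poly R}) : R :=
  \sum_(n < size P) (if (n %% m == i)%N then P`_n else 0).

Arguments Sm {R}.

Lemma SmE (R : nzRingType) m i (P : {poly R}) N : (size P <= N)%N ->
  Sm m i P = \sum_(n < N) (if (n %% m == i)%N then P`_n else 0).
Proof.
move=> hN; rewrite /Sm (big_ord_widen N (fun n => if (n %% m == i)%N then P`_n else 0)) //.
rewrite [RHS](bigID (fun n : 'I_N => (n < size P)%N)) /=.
rewrite [X in _ = _ + X]big1 ?addr0 // => n hn.
by rewrite nth_default ?if_same // leqNgt.
Qed.

Lemma Sm0 (R : nzRingType) m i : Sm m i (0 : {poly R}) = 0.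
Proof. by rewrite /Sm size_poly0 big_ord0. Qed.

Lemma SmD (R : nzRingType) m i (P Q : {poly R}) : Sm m i (P + Q) = Sm m i P + Sm m i Q.
Proof.
pose N := maxn (size P) (size Q).
rewrite (@SmE _ _ _ _ N) ?size_polyD // (@SmE _ _ _ P N) ?leq_maxl //.
rewrite (@SmE _ _ _ Q N) ?leq_maxr // -big_split /=.
by apply: eq_bigr => n _; rewrite coefD; case: ifP; rewrite ?addr0.
Qed.

Lemma SmN (R : nzRingType) m i (P : {poly R}) : Sm m i (- P) = - Sm m i P.
Proof.
rewrite /Sm size_polyN -sumrN; apply: eq_bigr => n _.
by rewrite coefN; case: ifP; rewrite ?oppr0.
Qed.

Lemma SmB (R : nzRingType) m i (P Q : {poly R}) : Sm m i (P - Q) = Sm m i P - Sm m i Q.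
Proof. by rewrite SmD SmN. Qed.

Lemma SmXnM (R : nzRingType) m i (G : {poly R}) : (0 < m)%N ->
  Sm m i ('X^m * G) = Sm m i G.
Proof.
move=> hm; rewrite (@SmE _ _ _ _ (m + size G)); last first.
  apply: (leq_trans (size_polyMleq _ _)); rewrite size_polyXn; lia.
rewrite big_split_ord /= big1 ?add0r; last first.
  by move=> n _; rewrite coefXnM /= ltn_ord if_same.
rewrite /Sm; apply: eq_bigr => n _.
by rewrite coefXnM /= ltnNge leq_addr /= addKn modnDl.
Qed.

Lemma SmXm1 (R : comNzRingType) m i (G : {poly R}) : (0 < m)%N ->
  Sm m i (G * ('X^m - 1)) = 0.
Proof. by move=> hm; rewrite mulrBr mulr1 SmB mulrC SmXnM // subrr. Qed.

Lemma SmMn (R : nzRingType) m i (P : {poly R}) c : Sm m i (P *+ c) = Sm m i P *+ c.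
Proof.
elim: c => [|c IH]; first by rewrite !mulr0n Sm0.
by rewrite !mulrS SmD IH.
Qed.

Lemma SmXn (R : nzRingType) m i n :
  Sm m i ('X^n : {poly R}) = if (n %% m == i)%N then 1 else 0.
Proof.
rewrite (@SmE _ _ _ _ n.+1) ?size_polyXn // big_ord_recr /= coefXn eqxx.
rewrite big1 ?add0r // => k _; rewrite coefXn.
by rewrite (ltn_eqF (ltn_ord k)); case: ifP.
Qed.

Lemma Sm_sum (R : nzRingType) m i (I : finType) (F : I -> {poly R}) :
  Sm m i (\sum_(g : I) F g) = \sum_(g : I) Sm m i (F g).
Proof. exact: (big_morph (Sm m i) (@SmD R m i) (Sm0 R m i)). Qed.

Lemma binsum_Sm (R : comNzRingType) p f (r : 'I_f -> nat) i :
  (i < (p ^ f).-1)%N ->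
  (binsum p r i)%:R =
    Sm (p ^ f).-1 i (\prod_(j < f) ('X^(p ^ j) + 1) ^+ r j : {poly R}).
Proof.
move=> hi; set m := (p ^ f).-1; set R0 := rmax r.
have hexp (j : 'I_f) : ('X^(p ^ j) + 1 : {poly R}) ^+ r j =
    \sum_(k < R0.+1) 'X^(k * p ^ j) *+ 'C(r j, k).
  rewrite exprD1n (big_ord_widen R0.+1 (fun k => ('X^(p ^ j)) ^+ k *+ 'C(r j, k))); last first.
    by rewrite ltnS /R0 /rmax (leq_bigmax j).
  rewrite big_mkcond; apply: eq_bigr => k _; rewrite -exprM mulnC.
  case: ifP => // /negbT; rewrite -leqNgt => hk.
  by rewrite bin_small ?mulr0n.
rewrite (eq_bigr _ (fun j _ => hexp j)) bigA_distr_bigA /= Sm_sum.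
rewrite /binsum natr_sum big_mkcond; apply: eq_bigr => g _.
rewrite prodrMn prodrXr SmMn SmXn.
case: (boolP [forall j, _]) => /= hall.
  rewrite /pval (modn_small hi).
  by case: ifP => _; rewrite ?mul0rn // natr_prod.
move/forallPn: hall => [j]; rewrite -ltnNge => hj.
by rewrite [X in _ *+ X](bigD1 j) //= bin_small // mul0n mulr0n.
Qed.

Lemma frob p (j : nat) : prime p ->
  ('X^(p ^ j) + 1 : {poly 'F_p}) = ('X + 1) ^+ (p ^ j).
Proof.
move=> hp; rewrite exprDn_pchar ?expr1n //.
rewrite (eq_pnat _ (pchar_poly _)) (eq_pnat _ (pcharf_eq (pchar_Fp hp))).
by rewrite pnatX pnat_id.
Qed.

Lemma pdvd_binq p f n : prime p -> (0 < n)%N -> (n < p ^ f)%N -> (p %| 'C(p ^ f, n))%N.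
Proof.
move=> hp n0 nq; apply/negPn/negP => hnd.
have hc : coprime (p ^ f) 'C(p ^ f, n).
  by apply: coprimeXl; rewrite prime_coprime.
case: n n0 nq hnd hc => // n _ nq hnd hc.
have : (p ^ f %| n.+1 * 'C(p ^ f, n.+1))%N.
  by rewrite -mul_bin_diag dvdn_mulr.
rewrite Gauss_dvdl // => h; have := dvdn_leq (ltn0Sn n) h; lia.
Qed.

Lemma binq_F p f i : prime p -> (i <= (p ^ f).-1)%N ->
  ('C((p ^ f).-1, i)%:R : 'F_p) = (-1) ^+ i.
Proof.
move=> hp; have hq : (0 < p ^ f)%N by rewrite expn_gt0 prime_gt0.
elim: i => [|i IH] hi; first by rewrite bin0 expr0.
have hlt : (i.+1 < p ^ f)%N by lia.
have := @pdvd_binq p f i.+1 hp (ltn0Sn i) hlt.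
rewrite -[X in 'C(X, _)](prednK hq) binS (dvdn_pcharf (pchar_Fp hp)) natrD.
rewrite IH ?(ltnW hi) // addr_eq0 => /eqP ->.
by rewrite exprS mulN1r.
Qed.

Lemma Epow p f k : prime p -> (1 <= f)%N -> (1 <= k)%N ->
  exists G : {poly 'F_p},
    ('X + 1) ^+ (k * (p ^ f).-1) = ('X + 1) ^+ (p ^ f).-1 + G * ('X^((p ^ f).-1) - 1).
Proof.
move=> hp hf hk.
have hq : (1 < p ^ f)%N.
  by rewrite -{1}(expn0 p) ltn_exp2l ?prime_gt1.
set m := (p ^ f).-1; set Y : {poly 'F_p} := 'X + 1.
have hm : (0 < m)%N by rewrite /m; lia.
have hYq : Y ^+ m.+1 = 'X * 'X^m + 1.
  by rewrite /m prednK ?(ltnW hq) // /Y -frob // -exprS prednK ?(ltnW hq).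
case Em : m hm hYq => [//|m'] _ hYq.
set E := Y ^+ m'.+1.
have hEE : E * E = E + Y ^+ m' * ('X * ('X^(m'.+1) - 1)).
  have -> : E * E = Y ^+ m' * Y ^+ m'.+2 by rewrite /E -!exprD; congr (_ ^+ _); lia.
  rewrite hYq /E [Y ^+ m'.+1]exprSr.
  move: (Y ^+ m') ('X^(m'.+1) : {poly 'F_p}) => A Z; rewrite /Y; ring.
elim: k hk => [//|k IH] _.
case: k IH => [|k] IH.
  by exists 0; rewrite mul1n mul0r addr0.
have [G hG] := IH isT.
exists (E * G + Y ^+ m' * 'X).
rewrite mulSn exprD -/E hG mulrDr hEE; ring.
Qed.

Lemma key_F p f (r : 'I_f -> nat) i :
  prime p -> (1 <= f)%N ->
  (0 < pval p r)%N -> ((p ^ f).-1 %| pval p r)%N ->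
  (i < (p ^ f).-1)%N ->
  ((binsum p r i)%:R : 'F_p) = if i == 0%N then 2 else (-1) ^+ i.
Proof.
move=> hp hf hr hdiv hi.
have hq : (1 < p ^ f)%N.
  by rewrite -{1}(expn0 p) ltn_exp2l ?prime_gt1.
set m := (p ^ f).-1.
have hm : (0 < m)%N by rewrite /m; lia.
rewrite binsum_Sm //.
have -> : (\prod_(j < f) ('X^(p ^ j) + 1) ^+ r j : {poly 'F_p}) =
    \prod_(j < f) ('X + 1) ^+ (p ^ j * r j).
  by apply: eq_bigr => j _; rewrite frob // exprM.
rewrite prodrXr.
have -> : (\sum_(j < f) p ^ j * r j)%N = (pval p r %/ m * m)%N.
  by rewrite divnK // /pval; apply: eq_bigr => j _; rewrite mulnC.
have hk : (1 <= pval p r %/ m)%N.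
  by rewrite divn_gt0 // dvdn_leq.
have [G ->] := @Epow p f _ hp hf hk.
rewrite SmD SmXm1 // addr0 exprD1n Sm_sum.
under eq_bigr do rewrite SmMn SmXn.
rewrite big_ord_recr /= modnn binn.
rewrite (bigD1 (Ordinal hi)) //= modn_small // eqxx big1; last first.
  move=> n hn; rewrite modn_small //.
  have -> : (val n == i) = false by exact: negbTE hn.
  by rewrite mul0rn.
rewrite (@binq_F p f i hp (ltnW hi)) addr0.
have [->|hi0] := eqVneq i 0%N; first by rewrite expr0 /= mulr1n.
by rewrite mul0rn addr0.
Qed.

Lemma bridge p (b : nat) (z : int) : prime p ->
  (b%:R : 'F_p) = z%:~R -> ((b%:Z) = z %[mod (p%:Z)])%Z.
Proof.
move=> hp h; apply/eqP; rewrite eqz_mod_dvd (dvdz_pcharf (pchar_Fp hp)).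
by rewrite rmorphB /= -h subr_eq0.
Qed.

Theorem lemma1 (p f : nat) (r : 'I_f -> nat) (i : nat) :
  prime p -> (1 <= f)%N ->
  (0 < pval p r)%N -> ((p ^ f).-1 %| pval p r)%N ->
  (i < (p ^ f).-1)%N ->
  ((0 < i)%N -> ((binsum p r i)%:Z = (-1) ^+ i %[mod (p%:Z)])%Z) /\
  (i = 0%N -> ((binsum p r i)%:Z = 2 %[mod (p%:Z)])%Z).
Proof.
move=> hp hf hr hdiv hi; have hk := @key_F p f r i hp hf hr hdiv hi.
split => hi0.
  apply: bridge => //; rewrite hk (gtn_eqF hi0) rmorphXn /= rmorphN1 //.
rewrite hi0 in hk *; apply: bridge => //; rewrite hk /=.
Qed.
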